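(* Let $n\ge2$ and let $z_1,\dots,z_n$ be indeterminates. For all integers $m,k\ge0$, \[ E(n)_{m+1,m+k+1}=\sum_{i=0}^{m}\binom{m}{i}\frac{(m+k)!}{(i+k)!}\,M(m+1-i,\,k+2i,\,n). \]
   Context: For distinct $i,j\in\{1,\dots,n\}$ and $m\ge0$, $e^{(i,j)}_m$ is the elementary symmetric polynomial of degree $m$ in the variables $\{z_l:l\ne i,j\}$ ($e^{(i,j)}_0=1$, and $0$ if $m>n-2$). $E(n)$ is the infinite matrix with entries $E(n)_{r,s}=(r-1)!(s-1)!\sum_{1\le i<j\le n}e^{(i,j)}_{r-1}e^{(i,j)}_{s-1}(z_i-z_j)^2$ for $r,s\ge1$. For $m_2\ge1$, $m_1\ge0$, with $N=m_1+m_2+1$ and sums over all $N$-tuples $(b_1,\dots,b_N)$ of pairwise distinct elements of $\{1,\dots,n\}$, \[ M(m_2,m_1,n)=\sum_{b} z_{b_1}^2\cdots z_{b_{m_2}}^2\,z_{b_{m_2+1}}\cdots z_{b_{m_2+m_1}}\;-\;\sum_{b} z_{b_1}^2\cdots z_{b_{m_2-1}}^2\,z_{b_{m_2}}z_{b_{m_2+1}}\cdots z_{b_{m_2+m_1+1}}. \] *)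

(* Defs.v *)
From HB Require Import structures.
From mathcomp Require Import all_boot all_algebra.
From mathcomp Require Import mpoly.
Set Implicit Arguments. Unset Strict Implicit. Unset Printing Implicit Defensive.
Import GRing.Theory.
Local Open Scope ring_scope.

(* Variables z_1..z_n are 'X_l for l : 'I_n (0-based). *)

(* e^{(i,j)}_m : elementary symmetric polynomial of degree m in {z_l : l <> i, j};
   it is 1 for m = 0 and 0 for m > n-2 automatically. *)
Definition eij (n : nat) (i j : 'I_n) (m : nat) : {mpoly rat[n]} :=
  \sum_(S : {set 'I_n} | (#|S| == m)%N && (i \notin S) && (j \notin S))
     \prod_(l in S) 'X_l.

(* E(n)_{r,s} for r, s >= 1 (1-based indices r, s). *)
Definition Emat (n r s : nat) : {mpoly rat[n]} :=
  ((r.-1)`! * (s.-1)`!)%:R *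
  \sum_(i : 'I_n) \sum_(j : 'I_n | (i < j)%N)
     eij i j r.-1 * eij i j s.-1 * ('X_i - 'X_j) ^+ 2.

(* M(m2, m1, n), N = m1 + m2 + 1, sums over injective b : 'I_N -> 'I_n
   (0-based positions t; position t corresponds to b_{t+1}). *)
Definition Mpoly (m2 m1 n : nat) : {mpoly rat[n]} :=
  let N := (m1 + m2).+1 in
  \sum_(b : {ffun 'I_N -> 'I_n} | injectiveb b)
     \prod_(t < N) 'X_(b t) ^+ (if (t < m2)%N then 2 else if (t < m2 + m1)%N then 1 else 0)
  - \sum_(b : {ffun 'I_N -> 'I_n} | injectiveb b)
     \prod_(t < N) 'X_(b t) ^+ (if (t < m2.-1)%N then 2 else 1).

(* Main.v *)
Require Import Defs.
From HB Require Import structures.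
From mathcomp Require Import all_boot all_algebra.
From mathcomp Require Import mpoly.
From mathcomp Require Import zify ring.
Set Implicit Arguments. Unset Strict Implicit. Unset Printing Implicit Defensive.
Import GRing.Theory.

Lemma card_setE (N : nat) (P : pred 'I_N) : #|[set s | P s]| = \sum_(s < N) P s.
Proof.
rewrite -sum1_card big_mkcond /=; apply: eq_bigr => s _; rewrite inE.
by case: (P s).
Qed.

Section GL.
Variables (T : finType) (V : eqType) (c : T -> V) (e : nat -> V).

Definition Sg N := [set b : {ffun 'I_N -> T} | injectiveb b && [forall t, c (b t) == e t]].
Definition ext N (b : {ffun 'I_N -> T}) (x : T) : {ffun 'I_N.+1 -> T} :=
  [ffun t => if unlift ord_max t is Some s then b s else x].

Lemma ext_lift N b x (s : 'I_N) : ext b x (lift ord_max s) = b s.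
Proof. by rewrite ffunE liftK. Qed.
Lemma ext_max N b x : @ext N b x ord_max = x.
Proof. by rewrite ffunE unlift_none. Qed.

Lemma ext_in N b x : (ext b x \in Sg N.+1) = [&& b \in Sg N, c x == e N & x \notin codom b].
Proof.
rewrite !inE.
have Hinj : injectiveb (ext b x) = injectiveb b && (x \notin codom b).
  apply/injectiveP/andP => [inj | [/injectiveP inj xn]].
  - split.
    + apply/injectiveP => s1 s2 h; apply: (@lift_inj _ ord_max); apply: inj.
      by rewrite !ext_lift.
    + apply/negP => /codomP [s hs]; have := neq_lift (@ord_max N) s.
      have e1 : ord_max = lift ord_max s by apply: inj; rewrite ext_max ext_lift.
      by rewrite {1}e1 eqxx.
  - move=> t1 t2; case: (unliftP ord_max t1) => [s1 ->|->];
      case: (unliftP ord_max t2) => [s2 ->|->]; rewrite ?ext_lift ?ext_max //.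
    + by move/inj ->.
    + by move=> h; rewrite -h codom_f in xn.
    + by move=> h; rewrite h codom_f in xn.
have Hall : [forall t, c (ext b x t) == e t] = [forall s : 'I_N, c (b s) == e s] && (c x == e N).
  apply/forallP/andP => [h | [/forallP h hx] t].
  - split; last by have := h ord_max; rewrite ext_max.
    apply/forallP => s; have := h (lift ord_max s); by rewrite ext_lift lift_max.
  - case: (unliftP ord_max t) => [s ->|->]; first by rewrite ext_lift lift_max.
    by rewrite ext_max.
rewrite Hinj Hall.
set a := injectiveb b; set f := [forall s, _]; set g := (c x == e N); set h := (x \in codom b).
by case: a; case: f; case: g; case: h.
Qed.

Lemma card_Sg N : #|Sg N| = \prod_(t < N) (#|[set x | c x == e t]| - \sum_(s < t) (e s == e t))%N.
Proof.
elim: N => [|N IH].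
  rewrite big_ord0.
  have -> : Sg 0 = [set: {ffun 'I_0 -> T}].
    apply/setP => b; rewrite !inE; apply/andP; split.
      by apply/injectiveP => -[].
    by apply/forallP => -[].
  by rewrite cardsT card_ffun card_ord expn0.
rewrite big_ord_recr /= -IH -[#|Sg N.+1|]sum1_card.
rewrite (reindex (fun bx : {ffun 'I_N -> T} * T => ext bx.1 bx.2)) /=; last first.
  exists (fun b : {ffun 'I_N.+1 -> T} => ([ffun s => b (lift ord_max s)], b ord_max)).
  - move=> [b x] _ /=; congr pair; last by rewrite ext_max.
    by apply/ffunP => s; rewrite ffunE ext_lift.
  - move=> b _; apply/ffunP => t; rewrite ffunE.
    by case: unliftP => [s ->|->] /=; rewrite ?ffunE.
rewrite (eq_bigl (fun bx => (bx.1 \in Sg N) && ((c bx.2 == e N) && (bx.2 \notin codom bx.1))));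
  last by move=> bx; rewrite ext_in.
rewrite -(pair_big_dep (fun b => b \in Sg N) (fun b x => (c x == e N) && (x \notin codom b)) (fun _ _ => 1%N)) /=.
rewrite -sum_nat_const; apply: eq_bigr => b bS.
have binj : injective b by move: bS; rewrite inE => /andP [/injectiveP].
have bc : forall s, c (b s) = e s by move: bS; rewrite inE => /andP [_ /forallP h] s; apply/eqP.
rewrite -(@card_setE N (fun s : 'I_N => e s == e N)).
set A := [set x | c x == e N].
have -> : \sum_(x | (c x == e N) && (x \notin codom b)) 1 = #|A :\: [set x in codom b]|.
  by rewrite -sum1_card; apply: eq_bigl => x; rewrite !inE andbC.
rewrite cardsD.
have -> : A :&: [set x in codom b] = b @: [set s : 'I_N | e s == e N].
  apply/setP => x; rewrite !inE; apply/andP/imsetP.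
  - by move=> [/eqP cx /codomP [s hs]]; exists s => //; rewrite inE -bc -hs cx.
  - by move=> [s]; rewrite inE => /eqP es ->; rewrite bc es codom_f.
by rewrite card_imset.
Qed.

End GL.


Definition blk a b (t : nat) : nat := if t < a then 2 else if t < a + b then 1 else 0.

Lemma sum_ind (P : pred nat) x y : (forall s, x <= s < y -> P s) -> \sum_(x <= s < y) P s = y - x.
Proof.
move=> H; rewrite (eq_big_nat _ _ (F2 := fun _ => 1)) ?sum_nat_const_nat ?muln1 //.
by move=> s /H ->.
Qed.

Lemma sum_ind0 (P : pred nat) x y : (forall s, x <= s < y -> ~~ P s) -> \sum_(x <= s < y) P s = 0.
Proof.
move=> H; rewrite (eq_big_nat _ _ (F2 := fun _ => 0)) ?sum_nat_const_nat ?muln0 //.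
by move=> s /H /negbTE ->.
Qed.

Lemma mkS t (F : nat -> nat) : \sum_(s < t) F s = \sum_(0 <= s < t) F s.
Proof. by rewrite big_mkord. Qed.
Lemma mkP t (F : nat -> nat) : \prod_(s < t) F s = \prod_(0 <= s < t) F s.
Proof. by rewrite big_mkord. Qed.

Lemma blk2 a b s : s < a -> blk a b s = 2. Proof. by rewrite /blk => ->. Qed.
Lemma blk1 a b s : a <= s < a + b -> blk a b s = 1.
Proof. by rewrite /blk => /andP [h1 ->]; rewrite ltnNge h1. Qed.
Lemma blk0 a b s : a + b <= s -> blk a b s = 0.
Proof. by rewrite /blk => h; rewrite !ltnNge h (leq_trans (leq_addr b a) h). Qed.

Lemma c2 a b t : t <= a -> \sum_(s < t) (blk a b s == 2) = t.
Proof.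
move=> h; rewrite (mkS _ (fun s => blk a b s == 2)) sum_ind ?subn0 // => s /andP [_ hs].
by rewrite blk2 //; apply: leq_trans h.
Qed.

Lemma c1 a b t : a <= t <= a + b -> \sum_(s < t) (blk a b s == 1) = t - a.
Proof.
move=> /andP [h1 h2]; rewrite (mkS _ (fun s => blk a b s == 1)) (big_cat_nat _ (n := a)) //=.
rewrite sum_ind0 ?add0n; last by move=> s /andP [_ hs]; rewrite blk2.
rewrite sum_ind // => s /andP [hs1 hs2]; rewrite blk1 // hs1 /=.
exact: leq_trans hs2 h2.
Qed.

Lemma c0 a b t : a + b <= t -> \sum_(s < t) (blk a b s == 0) = t - (a + b).
Proof.
move=> h; rewrite (mkS _ (fun s => blk a b s == 0)) (big_cat_nat _ (n := a + b)) //=.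
rewrite sum_ind0 ?add0n; last first.
  move=> s /andP [_ hs]; rewrite /blk; case: ifP => //; by rewrite hs.
by rewrite sum_ind // => s /andP [hs _]; rewrite blk0.
Qed.

Lemma tot2 a b N : a <= N -> \sum_(t < N) (blk a b t == 2) = a.
Proof.
move=> h; rewrite (mkS _ (fun s => blk a b s == 2)) (big_cat_nat _ (n := a)) //=.
rewrite sum_ind ?subn0; last by move=> s /andP [_ hs]; rewrite blk2.
rewrite sum_ind0 ?addn0 // => s /andP [hs _]; rewrite /blk ltnNge hs /=.
by case: ifP.
Qed.

Lemma tot1 a b N : a + b <= N -> \sum_(t < N) (blk a b t == 1) = b.
Proof.
move=> h; rewrite (mkS _ (fun s => blk a b s == 1)) (big_cat_nat _ (n := a)) //=; last exact: leq_trans (leq_addr b a) h.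
rewrite sum_ind0 ?add0n; last by move=> s /andP [_ hs]; rewrite blk2.
rewrite (big_cat_nat _ (n := a + b)) //=; last exact: leq_addr.
rewrite sum_ind ?addKn; last by move=> s hs; rewrite blk1.
by rewrite sum_ind0 ?addn0 // => s /andP [hs _]; rewrite blk0.
Qed.

Lemma prod_ff0 x L M : \prod_(x <= t < x + L) (M - (t - x)) = M ^_ L.
Proof.
elim: L => [|L IH]; first by rewrite addn0 big_geq.
by rewrite addnS big_nat_recr ?leq_addr //= IH addKn ffactnSr.
Qed.

Lemma prod_ff x y M : x <= y -> \prod_(x <= t < y) (M - (t - x)) = M ^_ (y - x).
Proof. by move=> h; rewrite -{1}(subnKC h) prod_ff0. Qed.

Lemma prod_blk a b r N (cntf : nat -> nat) M0 :
  N = a + b + r -> cntf 2 = a -> cntf 1 = b -> cntf 0 = M0 ->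
  \prod_(t < N) (cntf (blk a b t) - \sum_(s < t) (blk a b s == blk a b t)) = a`! * b`! * M0 ^_ r.
Proof.
move=> -> h2 h1 h0.
rewrite (mkP _ (fun t => cntf (blk a b t) - \sum_(s < t) (blk a b s == blk a b t))) (big_cat_nat _ (n := a)) //=; last by rewrite -addnA leq_addr.
rewrite [X in _ * X](big_cat_nat _ (n := a + b)) ?leq_addr //=.
rewrite (eq_big_nat _ _ (F2 := fun t => a - (t - 0))); last first.
  by move=> t /andP [_ ht]; rewrite blk2 // h2 c2 ?subn0 // ltnW.
rewrite [X in _ * (X * _)](eq_big_nat _ _ (F2 := fun t => b - (t - a))); last first.
  move=> t /andP [ht1 ht2]; rewrite blk1 ?ht1 // h1 c1 //.
  by rewrite ht1 ltnW.
rewrite [X in _ * (_ * X)](eq_big_nat _ _ (F2 := fun t => M0 - (t - (a + b)))); last first.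
  by move=> t /andP [ht1 ht2]; rewrite blk0 // h0 c0.
rewrite !prod_ff ?leq_addr // subn0 !addKn !ffactnn.
by rewrite mulnA.
Qed.

Local Open Scope ring_scope.

Lemma sum_fiber (I J : finType) (V : nmodType) (P : pred I) (f : I -> J) (G : J -> V) (H : I -> V) :
  (forall x, P x -> H x = G (f x)) ->
  \sum_(x | P x) H x = \sum_(y : J) G y *+ #|[set x | P x & f x == y]|.
Proof.
move=> HG; rewrite (eq_bigr _ HG).
rewrite (partition_big f predT) //; apply: eq_bigr => y _.
rewrite (eq_bigr (fun _ => G y)); last by move=> x /andP[_ /eqP ->].
by rewrite -sumr_const; apply: eq_bigl => x; rewrite inE.
Qed.

Lemma disjPt (T : finType) (A B : {set T}) :
  [disjoint A & B] -> forall x, x \in A -> x \in B -> False.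
Proof. by move=> d x xA xB; rewrite (disjointFr d xA) in xB. Qed.

Lemma disjI (T : finType) (A B : {set T}) :
  (forall x, x \in A -> x \in B -> False) -> [disjoint A & B].
Proof.
move=> h; rewrite -setI_eq0; apply/eqP/setP => x; rewrite !inE.
by apply/negbTE/negP => /andP[] /h h' /h'.
Qed.

Ltac bsolve := move=> //=; repeat (let h := fresh "h" in move=> h); try done; exfalso; auto.

Section P.
Variable n : nat.
Notation P := {mpoly rat[n]}.

Definition F (A B : {set 'I_n}) : P := \prod_(l in A) 'X_l ^+ 2 * \prod_(l in B) 'X_l.

Definition good (R : {set 'I_n}) p q (y : {set 'I_n} * {set 'I_n}) :=
  [&& [disjoint y.1 & y.2], y.1 \subset R, y.2 \subset R, #|y.1| == p & #|y.2| == q].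

Definition Qr R p q := \sum_(y | good R p q y) F y.1 y.2.

Lemma prod_in (S : {set 'I_n}) (k : nat) :
  \prod_(l in S) ('X_l : P) ^+ k = \prod_l 'X_l ^+ (k * (l \in S)).
Proof. by rewrite big_mkcond; apply: eq_bigr => l _; case: (l \in S); rewrite ?muln1 ?muln0. Qed.

Lemma S_prod (S T : {set 'I_n}) :
  \prod_(l in S) ('X_l : P) * \prod_(l in T) 'X_l =
  F (S :&: T) ((S :\: T) :|: (T :\: S)).
Proof.
rewrite /F -[\prod_(l in S) _](eq_bigr _ (fun l _ => expr1 ('X_l : P))).
rewrite -[\prod_(l in T) _](eq_bigr _ (fun l _ => expr1 ('X_l : P))).
rewrite -[\prod_(l in _ :|: _) _](eq_bigr _ (fun l _ => expr1 ('X_l : P))).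
rewrite !prod_in -!big_split /=; apply: eq_bigr => l _; rewrite -!exprD; congr (_ ^+ _).
by rewrite !inE; case: (l \in S); case: (l \in T).
Qed.


Lemma cardUd (A U : {set 'I_n}) : [disjoint A & U] -> #|A :|: U| = (#|A| + #|U|)%N.
Proof. by move=> d; rewrite cardsU (disjoint_setI0 d) cards0 subn0. Qed.

Lemma cardSD (S T : {set 'I_n}) :
  #|(S :\: T) :|: (T :\: S)| = (#|S| + #|T| - 2 * #|S :&: T|)%N.
Proof.
rewrite cardUd; last by apply: disjI => l; rewrite !inE; case: (l \in S); case: (l \in T).
rewrite !cardsD [T :&: S]setIC.
have := subset_leq_card (subsetIl S T); have := subset_leq_card (subsetIr S T); lia.
Qed.

Definition PP1 (R : {set 'I_n}) m k (x : {set 'I_n} * {set 'I_n}) :=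
  ((#|x.1| == m) && (x.1 \subset R)) && ((#|x.2| == m + k)%N && (x.2 \subset R)).
Definition f1 m (x : {set 'I_n} * {set 'I_n}) : 'I_m.+1 * ({set 'I_n} * {set 'I_n}) :=
  (inord (m - #|x.1 :&: x.2|), (x.1 :&: x.2, (x.1 :\: x.2) :|: (x.2 :\: x.1))).

Lemma S1card R m k (i : 'I_m.+1) A B :
  #|[set x | PP1 R m k x & f1 m x == (i, (A, B))]| =
  if good R (m - i)%N (k + 2 * i)%N (A, B) then 'C(k + 2 * i, i) else 0%N.
Proof.
have hi := ltn_ord i.
case: ifP => G.
- move: G => /and5P [/= dAB sAR sBR /eqP cA /eqP cB].
  have dp := disjPt dAB.
  rewrite -cB -cards_draws.
  rewrite -(@card_in_imset _ _ (fun U => (A :|: U, A :|: (B :\: U)))); last first.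
    move=> U1 U2; rewrite !inE => /andP[s1 _] /andP[s2 _] [e _].
    apply/setP => l; move/setP: e => /(_ l); rewrite !inE.
    have := dp l; have := subsetP s1 l; have := subsetP s2 l.
    by case: (l \in A); case: (l \in U1); case: (l \in U2); case: (l \in B); bsolve.
  apply: eq_card => -[S T]; rewrite !inE /PP1 /f1 /=; apply/idP/idP.
  + move=> /andP [/andP[/andP[/eqP cS sSR] /andP[/eqP cT sTR]] /eqP [ei eA eB]].
    apply/imsetP; exists (S :\: T).
      rewrite inE -eB subsetUl /= cardsD eA cS cA; apply/eqP; lia.
    rewrite -eA -eB; congr pair; apply/setP => l; rewrite !inE;
      by case: (l \in S); case: (l \in T).
  + move=> /imsetP [U]; rewrite inE => /andP [sUB /eqP cU] [-> ->].
    have hU := subsetP sUB.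
    have dAU : [disjoint A & U] by apply: disjI => l lA /hU; apply: dp.
    have dAB' : [disjoint A & B :\: U] by apply: disjI => l lA; rewrite inE => /andP[_]; apply: dp.
    have eI : (A :|: U) :&: (A :|: B :\: U) = A.
      by apply/setP => l; rewrite !inE; case: (l \in A); case: (l \in U).
    have eD : ((A :|: U) :\: (A :|: B :\: U)) :|: ((A :|: B :\: U) :\: (A :|: U)) = B.
      apply/setP => l; rewrite !inE; have := dp l; have := hU l.
      by case: (l \in A); case: (l \in U); case: (l \in B); bsolve.
    rewrite eI eD cardUd // cardUd // cardsDS // cA cU.
    have -> : inord (m - (m - i)) = i by apply: val_inj; rewrite /= inordK; lia.
    rewrite eqxx /= !andbT.
    have := subset_leq_card sUB; rewrite cB cU => hle.
    apply/andP; split; first (apply/andP; split; first by apply/eqP; lia).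
      by apply/subsetP => l; rewrite !inE => /orP[/(subsetP sAR)|/hU/(subsetP sBR)].
    apply/andP; split; first by apply/eqP; lia.
    by apply/subsetP => l; rewrite !inE => /orP[/(subsetP sAR)|/andP[_ /(subsetP sBR)]].
- apply/eqP; rewrite cards_eq0; apply/eqP/setP => [[S T]]; rewrite !inE /PP1 /f1 /=.
  apply/negbTE/negP => /andP [/andP[/andP[/eqP cS sSR] /andP[/eqP cT sTR]] /eqP [ei eA eB]].
  move/negbT: G; apply/negP; rewrite negbK /good /= -eA -eB.
  have c1 := subset_leq_card (subsetIl S T); rewrite cS in c1.
  have vi : (i : nat) = (m - #|S :&: T|)%N by rewrite -ei inordK // ltnS leq_subr.
  apply/and5P; split.
  + by apply: disjI => l; rewrite !inE => /andP[-> ->] /orP[] /andP[].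
  + by apply/subsetP => l; rewrite inE => /andP[/(subsetP sSR)].
  + by apply/subsetP => l; rewrite !inE => /orP[]/andP[_]; [apply: (subsetP sSR)|apply: (subsetP sTR)].
  + by rewrite vi subKn.
  + rewrite cardSD cS cT; apply/eqP; lia.
Qed.


Lemma S1 (R : {set 'I_n}) m k :
 (\sum_(S : {set 'I_n} | (#|S| == m) && (S \subset R)) \prod_(l in S) ('X_l : P)) *
 (\sum_(T : {set 'I_n} | (#|T| == m + k)%N && (T \subset R)) \prod_(l in T) ('X_l : P))
 = \sum_(i < m.+1) Qr R (m - i)%N (k + 2 * i)%N *+ 'C(k + 2 * i, i).
Proof.
rewrite mulr_suml; under eq_bigr do rewrite mulr_sumr.
rewrite pair_big_dep /=.
rewrite (@sum_fiber _ _ _ (PP1 R m k) (@f1 m) (fun y => F y.2.1 y.2.2)); last first.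
  by move=> x _; rewrite S_prod.
rewrite -(pair_bigA _ (fun i AB => F AB.1 AB.2 *+ #|[set x | PP1 R m k x & f1 m x == (i, AB)]|)) /=.
apply: eq_bigr => i _; rewrite /Qr -sumrMnl [RHS]big_mkcond /=.
apply: eq_bigr => -[A B] _; rewrite S1card /=.
by case: ifP => _; rewrite ?mulr0n.
Qed.


Definition P2 p q (x : ('I_n * 'I_n) * ({set 'I_n} * {set 'I_n})) :=
  (x.1.1 != x.1.2) && good (~: [set x.1.1; x.1.2]) p q x.2.
Definition f2 (x : ('I_n * 'I_n) * ({set 'I_n} * {set 'I_n})) := (x.1.1 |: x.2.1, x.2.2).

Lemma S2card p q A' B :
  #|[set x | P2 p q x & f2 x == (A', B)]| =
  if good [set: 'I_n] p.+1 q (A', B) then (p.+1 * (n - (p.+1 + q)))%N else 0%N.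
Proof.
case: ifP => G.
- move: G => /and5P [/= dAB _ _ /eqP cA /eqP cB].
  have dp := disjPt dAB.
  have cC : #|~: (A' :|: B)| = (n - (p.+1 + q))%N.
    by have := cardsC (A' :|: B); rewrite card_ord cardUd // cA cB; lia.
  rewrite -cC -cA -cardsX.
  rewrite -(@card_in_imset _ _ (fun ij : 'I_n * 'I_n => (ij, (A' :\ ij.1, B)))); last first.
    by move=> x y _ _ [].
  apply: eq_card => -[[i j] [A B0]]; rewrite !inE /P2 /f2 /good /=; apply/idP/idP.
  + move=> /andP [/andP [nij /and5P [dA sA sB0 /eqP cA0 /eqP cB0]] /eqP [eA eB]].
    have iA : i \notin A by apply/negP => /(subsetP sA); rewrite !inE eqxx.
    apply/imsetP; exists (i, j).
      rewrite inE /= -eA -eB !inE eqxx /= !negb_or eq_sym nij /=; apply/andP; split.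
        by apply/negP => jA; move: (subsetP sA j jA); rewrite !inE eqxx orbT.
      apply/negP => jB; move: (subsetP sB0 j jB); rewrite !inE eqxx orbT; done.
    congr (_, (_, _)) => //; rewrite -eA; apply/setP => l; rewrite !inE.
    by case: eqP => [->|]; [rewrite (negbTE iA)|].
  + move=> /imsetP [[i' j']]; rewrite inE /= !inE negb_or => /andP [iA /andP [jA jB]] [-> -> -> ->].
    have nij : i' != j' by apply/eqP => e; rewrite -e iA in jA.
    rewrite nij /= setD1K // eqxx andbT.
    rewrite (cardsD1 i' A') iA in cA.
    apply/and5P; split => //.
    * by apply: disjI => l; rewrite !inE => /andP [_ /dp h] /h.
    * apply/subsetP => l; rewrite !inE => /andP [li lA]; rewrite negb_or li /=.
      by apply/eqP => e; rewrite -e lA in jA.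
    * apply/subsetP => l lB; rewrite !inE; apply/norP; split.
        by apply/negP => /eqP e; rewrite -e in iA; exact: (dp _ iA lB).
      by apply/eqP => e; rewrite -e lB in jB.
    * by apply/eqP; move: cA; rewrite add1n => -[].
    * by rewrite cB.
- apply/eqP; rewrite cards_eq0; apply/eqP/setP => -[[i j] [A B0]]; rewrite !inE /P2 /f2 /=.
  apply/negbTE/negP => /andP [/andP [nij /and5P [dA sA sB0 /eqP cA0 /eqP cB0]] /eqP [eA eB]].
  move/negbT: G; apply/negP; rewrite negbK /good /= -eA -eB.
  have iA : i \notin A by apply/negP => /(subsetP sA); rewrite !inE eqxx.
  have iB : i \notin B0 by apply/negP => /(subsetP sB0); rewrite !inE eqxx.
  rewrite !subsetT cardsU1 iA cA0 cB0 !eqxx !andbT /=.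
  apply: disjI => l; rewrite !inE => /orP [/eqP ->|lA]; first by rewrite (negbTE iB).
  exact: (disjPt dA lA).
Qed.


Definition f3 (x : ('I_n * 'I_n) * ({set 'I_n} * {set 'I_n})) := (x.2.1, x.1.1 |: (x.1.2 |: x.2.2)).

Lemma card_offdiag (B : {set 'I_n}) :
  #|setX B B :\: [set ij : 'I_n * 'I_n | ij.1 == ij.2]| = (#|B| * #|B|.-1)%N.
Proof.
rewrite cardsD cardsX.
have -> : setX B B :&: [set ij : 'I_n * 'I_n | ij.1 == ij.2] = [set (i, i) | i in B].
  apply/setP => -[i j]; rewrite !inE /=; apply/idP/imsetP.
    by move=> /andP [/andP [iB jB] /eqP e]; exists j => //; rewrite e.
  by move=> [l lB [-> ->]]; rewrite lB eqxx.
rewrite card_imset; last by move=> x y [].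
by case: #|B| => // c; rewrite mulnS /= addKn.
Qed.

Lemma S3card p q A B' :
  #|[set x | P2 p q x & f3 x == (A, B')]| =
  if good [set: 'I_n] p q.+2 (A, B') then (q.+2 * q.+1)%N else 0%N.
Proof.
case: ifP => G.
- move: G => /and5P [/= dAB _ _ /eqP cA /eqP cB].
  have dp := disjPt dAB.
  have -> : (q.+2 * q.+1)%N = (#|B'| * #|B'|.-1)%N by rewrite cB.
  rewrite -card_offdiag.
  rewrite -(@card_in_imset _ _ (fun ij : 'I_n * 'I_n => (ij, (A, B' :\ ij.1 :\ ij.2)))); last first.
    by move=> x y _ _ [].
  apply: eq_card => -[[i j] [A0 B0]]; rewrite !inE /P2 /f3 /good /=; apply/idP/idP.
  + move=> /andP [/andP [nij /and5P [dA sA sB0 /eqP cA0 /eqP cB0]] /eqP [eA eB]].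
    apply/imsetP; exists (i, j).
      by rewrite !inE /= -eB !inE !eqxx /= orbT nij.
    congr (_, (_, _)) => //; rewrite -eB; apply/setP => l; rewrite !inE.
    have := subsetP sB0 l; rewrite !inE.
    by rewrite /=; case: (l == i); case: (l == j); case: (l \in B0); bsolve.
  + move=> /imsetP [[i' j']]; rewrite !inE /= => /and3P [nij iB jB] [-> -> -> ->].
    rewrite nij /=.
    have -> : i' |: (j' |: B' :\ i' :\ j') = B'.
      apply/setP => l; rewrite !inE.
      by case: (l =P i') => [->|] /=; [rewrite iB|case: (l =P j') => [->|] /=; [rewrite jB|]].
    rewrite eqxx andbT.
    apply/and5P; split => //.
    * apply: disjI => l lA; rewrite !inE => /andP [_ /andP [_ lB]]; exact: (dp _ lA lB).
    * apply/subsetP => l lA; rewrite !inE negb_or; apply/andP; split.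
        by apply/negP => /eqP e; rewrite e in lA; exact: (dp _ lA iB).
      by apply/negP => /eqP e; rewrite e in lA; exact: (dp _ lA jB).
    * by apply/subsetP => l; rewrite !inE negb_or => /andP [-> /andP [-> _]].
    * by rewrite cA.
    * move: cB; rewrite (cardsD1 i' B') iB (cardsD1 j' (B' :\ i')) !inE eq_sym nij jB.
      by rewrite !add1n => -[] ->.
- apply/eqP; rewrite cards_eq0; apply/eqP/setP => -[[i j] [A0 B0]]; rewrite !inE /P2 /f3 /=.
  apply/negbTE/negP => /andP [/andP [nij /and5P [dA sA sB0 /eqP cA0 /eqP cB0]] /eqP [eA eB]].
  move/negbT: G; apply/negP; rewrite negbK /good /= -eA -eB.
  have iB : i \notin B0 by apply/negP => /(subsetP sB0); rewrite !inE eqxx.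
  have jB : j \notin B0 by apply/negP => /(subsetP sB0); rewrite !inE eqxx orbT.
  have iA : i \notin A0 by apply/negP => /(subsetP sA); rewrite !inE eqxx.
  have jA : j \notin A0 by apply/negP => /(subsetP sA); rewrite !inE eqxx orbT.
  rewrite !subsetT cardsU1 cardsU1 !inE negb_or nij iB jB cA0 cB0 !eqxx !andbT /=.
  apply: disjI => l lA; rewrite !inE => /orP [/eqP e|/orP [/eqP e|lB]].
  + by rewrite -e lA in iA.
  + by rewrite -e lA in jA.
  + exact: (disjPt dA lA lB).
Qed.


Lemma S2 p q :
  \sum_(i : 'I_n) \sum_(j : 'I_n | i != j) ('X_i : P) ^+ 2 * Qr (~: [set i; j]) p q =
  Qr [set: 'I_n] p.+1 q *+ (p.+1 * (n - (p.+1 + q))).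
Proof.
under eq_bigr => i _ do under eq_bigr => j _ do rewrite /Qr mulr_sumr.
rewrite pair_big_dep /= pair_big_dep /=.
rewrite (@sum_fiber _ _ _ (P2 p q) f2 (fun y => F y.1 y.2)); last first.
  move=> [[i j] [A B]] /andP [_ /and5P [_ sA _ _ _]] /=.
  rewrite /F /= big_setU1 /= ?mulrA //.
  by apply/negP => /(subsetP sA); rewrite !inE eqxx.
rewrite /Qr -sumrMnl [RHS]big_mkcond /=; apply: eq_bigr => -[A B] _; rewrite S2card.
by case: ifP => _; rewrite ?mulr0n.
Qed.

Lemma S3 p q :
  \sum_(i : 'I_n) \sum_(j : 'I_n | i != j) (('X_i : P) * 'X_j) * Qr (~: [set i; j]) p q =
  Qr [set: 'I_n] p q.+2 *+ (q.+2 * q.+1).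
Proof.
under eq_bigr => i _ do under eq_bigr => j _ do rewrite /Qr mulr_sumr.
rewrite pair_big_dep /= pair_big_dep /=.
rewrite (@sum_fiber _ _ _ (P2 p q) f3 (fun y => F y.1 y.2)); last first.
  move=> [[i j] [A B]] /andP [nij /and5P [_ _ sB _ _]] /=.
  have iB : i \notin B by apply/negP => /(subsetP sB); rewrite !inE eqxx.
  have jB : j \notin B by apply/negP => /(subsetP sB); rewrite !inE eqxx orbT.
  rewrite /F /= big_setU1 /=; last by rewrite !inE negb_or nij.
  rewrite big_setU1 //=.
  set a := \prod_(l in A) _; set b := \prod_(l in B) _; by rewrite !mulrA [_ * a]mulrC !mulrA.
rewrite /Qr -sumrMnl [RHS]big_mkcond /=; apply: eq_bigr => -[A B] _; rewrite S3card.
by case: ifP => _; rewrite ?mulr0n.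
Qed.


Definition cnt p q (v : nat) : nat := if v == 2%N then p else if v == 1%N then q else (n - (p + q))%N.
Definition cAB (A B : {set 'I_n}) (l : 'I_n) : nat := if l \in A then 2%N else if l \in B then 1%N else 0%N.

Section SR.
Variables (N : nat) (e : nat -> nat).
Hypothesis he : forall t, (t < N)%N -> (e t <= 2)%N.
Let p := (\sum_(t < N) (e t == 2%N))%N.
Let q := (\sum_(t < N) (e t == 1%N))%N.
Let S2 := [set t : 'I_N | e t == 2%N].
Let S1 := [set t : 'I_N | e t == 1%N].
Definition fR (b : {ffun 'I_N -> 'I_n}) := (b @: S2, b @: S1).

Lemma SRcard A B :
  #|[set b : {ffun 'I_N -> 'I_n} | injectiveb b & fR b == (A, B)]| =
  if good [set: 'I_n] p q (A, B) then
    (\prod_(t < N) (cnt p q (e t) - \sum_(s < t) (e s == e t)))%N else 0%N.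
Proof.
have cS2 : #|S2| = p by rewrite card_setE.
have cS1 : #|S1| = q by rewrite card_setE.
case: ifP => G.
- move: G => /and5P [/= dAB _ _ /eqP cA /eqP cB].
  have dp := disjPt dAB.
  have -> : [set b : {ffun 'I_N -> 'I_n} | injectiveb b & fR b == (A, B)] = Sg (cAB A B) e N.
    apply/setP => b; rewrite !inE /fR; apply/andP/andP => -[binj H]; split => //.
    + move/injectiveP: binj => binj; move/eqP: H => [eA eB].
      apply/forallP => t; rewrite /cAB.
      have := he (ltn_ord t).
      case E2: (e t == 2%N).
        by rewrite -eA (imset_f b) ?inE ?E2 // (eqP E2).
      case E1: (e t == 1%N).
        rewrite -eB (imset_f b) ?inE ?E1 // (eqP E1).
        case: ifP => // bA; exfalso; apply: (dp (b t)) => //.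
        by rewrite -eB (imset_f b) // inE E1.
      have -> : b t \in A = false.
        by rewrite -eA; apply/negbTE/imsetP => -[t' t'in /binj et]; rewrite -et inE E2 in t'in.
      have -> : b t \in B = false.
        by rewrite -eB; apply/negbTE/imsetP => -[t' t'in /binj et]; rewrite -et inE E1 in t'in.
      by move: E2 E1; case: (e t) => [|[|[|]]].
    + move/injectiveP: binj => binj; move/forallP: H => H.
      have Hc t : cAB A B (b t) = e t by apply/eqP.
      apply/eqP; congr pair; apply/eqP; rewrite eqEcard card_imset // ?cA ?cB ?cS2 ?cS1 leqnn andbT.
      * apply/subsetP => x /imsetP [t]; rewrite inE => /eqP et ->.
        by move: (Hc t); rewrite et /cAB; case: ifP => //; case: ifP.
      * apply/subsetP => x /imsetP [t]; rewrite inE => /eqP et ->.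
        by move: (Hc t); rewrite et /cAB; case: ifP => //; case: ifP.
  rewrite card_Sg; apply: eq_bigr => t _; congr (_ - _)%N.
  have := he (ltn_ord t); rewrite /cnt.
  case E: (e t) => [|[|[|]]] // _ /=.
  + have -> : [set x | cAB A B x == 0%N] = ~: (A :|: B).
      by apply/setP => x; rewrite !inE /cAB; case: (x \in A); case: (x \in B).
    move: (cardsC (A :|: B)); rewrite card_ord cardUd // cA cB => h.
    by rewrite -[X in (X - _)%N]h addKn.
  + have -> : [set x | cAB A B x == 1%N] = B.
      by apply/setP => x; rewrite !inE /cAB; have := dp x; case: (x \in A); case: (x \in B); bsolve.
    by rewrite cB.
  + have -> : [set x | cAB A B x == 2%N] = A.
      by apply/setP => x; rewrite !inE /cAB; case: (x \in A); case: (x \in B).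
    by rewrite cA.
- apply/eqP; rewrite cards_eq0; apply/eqP/setP => b; rewrite !inE.
  apply/negbTE/negP => /andP [/injectiveP binj /eqP [eA eB]].
  move/negbT: G; apply/negP; rewrite negbK /good /= -eA -eB !subsetT.
  rewrite !card_imset // cS2 cS1 !eqxx !andbT.
  apply: disjI => x /imsetP [t1]; rewrite inE => /eqP e1 -> /imsetP [t2]; rewrite inE => /eqP e2 /binj et.
  by move: e1; rewrite et e2.
Qed.

Lemma SR :
  \sum_(b : {ffun 'I_N -> 'I_n} | injectiveb b) \prod_(t < N) ('X_(b t) : P) ^+ e t =
  Qr [set: 'I_n] p q *+ (\prod_(t < N) (cnt p q (e t) - \sum_(s < t) (e s == e t)))%N.
Proof.
rewrite (@sum_fiber _ _ _ (fun b : {ffun 'I_N -> 'I_n} => injectiveb b) fR (fun y => F y.1 y.2)); last first.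
  move=> b /injectiveP binj; rewrite /F /fR /= !big_imset /=; try by move=> x y _ _ /binj.
  rewrite [\prod_(t in S2) _]big_mkcond [\prod_(t in S1) _]big_mkcond -big_split /=.
  apply: eq_bigr => t _; rewrite !inE; have := he (ltn_ord t).
  by case: (e t) => [|[|[|]]] //= _; rewrite ?mulr1 ?mul1r ?expr1.
rewrite /Qr -sumrMnl [RHS]big_mkcond /=; apply: eq_bigr => -[A B] _; rewrite SRcard.
by case: ifP => _; rewrite ?mulr0n.
Qed.

End SR.


Lemma Mform m2 m1 :
  Mpoly m2.+1 m1 n = Qr [set: 'I_n] m2.+1 m1 *+ (m2.+1`! * m1`! * (n - (m2.+1 + m1)))
                     - Qr [set: 'I_n] m2 m1.+2 *+ (m2`! * m1.+2`!).
Proof.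
rewrite /Mpoly /=.
have hN1 : (m1 + m2.+1).+1 = (m2.+1 + m1 + 1)%N by lia.
have hN2 : (m1 + m2.+1).+1 = (m2 + m1.+2 + 0)%N by lia.
congr (_ - _).
- rewrite (@SR (m1 + m2.+1).+1 (blk m2.+1 m1)); last first.
    by move=> t _; rewrite /blk; case: ifP => //; case: ifP.
  rewrite tot2 ?tot1; try lia.
  rewrite (@prod_blk m2.+1 m1 1 _ (cnt m2.+1 m1) (n - (m2.+1 + m1))) //.
  by rewrite ffactn1.
- have -> : \sum_(b : {ffun 'I_(m1 + m2.+1).+1 -> 'I_n} | injectiveb b)
       \prod_(t < (m1 + m2.+1).+1) ('X_(b t) : P) ^+ (if (t < m2.+1.-1)%N then 2%N else 1%N) =
     \sum_(b : {ffun 'I_(m1 + m2.+1).+1 -> 'I_n} | injectiveb b)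
       \prod_(t < (m1 + m2.+1).+1) ('X_(b t) : P) ^+ (blk m2 m1.+2 t).
    apply: eq_bigr => b _; apply: eq_bigr => t _; congr (_ ^+ _).
    rewrite /blk /=; case: ifP => // _.
    have := ltn_ord t; case: ifP => //; lia.
  rewrite (@SR (m1 + m2.+1).+1 (blk m2 m1.+2)); last first.
    by move=> t _; rewrite /blk; case: ifP => //; case: ifP.
  rewrite tot2 ?tot1; try lia.
  rewrite (@prod_blk m2 m1.+2 0 _ (cnt m2 m1.+2) (n - (m2 + m1.+2))) //.
  by rewrite ffactn0 muln1.
Qed.

Lemma eij_sub (i j : 'I_n) m : eij i j m =
  \sum_(S : {set 'I_n} | (#|S| == m) && (S \subset ~: [set i; j])) \prod_(l in S) ('X_l : P).
Proof.
apply: eq_bigl => S; rewrite -andbA; congr (_ && _).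
apply/andP/subsetP => [[iS jS] l lS | h].
  rewrite !inE negb_or; apply/andP; split; apply/negP => /eqP e.
    by rewrite -e lS in iS.
  by rewrite -e lS in jS.
by split; apply/negP => /h; rewrite !inE eqxx ?orbT.
Qed.

Lemma eij_sym (i j : 'I_n) m : eij i j m = eij j i m.
Proof. by apply: eq_bigl => S; rewrite -!andbA; congr (_ && _); rewrite andbC. Qed.

Lemma split_neq (K : 'I_n -> 'I_n -> P) :
  \sum_(i : 'I_n) \sum_(j : 'I_n | i != j) K i j = \sum_(i : 'I_n) \sum_(j : 'I_n | (i < j)%N) (K i j + K j i).
Proof.
transitivity (\sum_(i : 'I_n) \sum_(j : 'I_n | (i < j)%N) K i j + \sum_(i : 'I_n) \sum_(j : 'I_n | (j < i)%N) K i j).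
  rewrite -big_split; apply: eq_bigr => i _; rewrite (bigID (fun j : 'I_n => (i < j)%N)) /=.
  congr (_ + _); apply: eq_bigl => j; rewrite -(inj_eq val_inj) /= neq_ltn.
    by case: ltngtP.
  by case: ltngtP.
under [RHS]eq_bigr => i _ do rewrite big_split.
rewrite big_split /=; congr (_ + _).
by rewrite (exchange_big_dep xpredT) //=.
Qed.

Lemma Eform m k : Emat n m.+1 (m + k).+1 =
  (m`! * (m + k)`!)%:R *
  (\sum_(i : 'I_n) \sum_(j : 'I_n | i != j) ('X_i : P) ^+ 2 * (eij i j m * eij i j (m + k))
   - \sum_(i : 'I_n) \sum_(j : 'I_n | i != j) (('X_i : P) * 'X_j) * (eij i j m * eij i j (m + k))).
Proof.
rewrite /Emat /=; congr (_ * _).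
rewrite !split_neq -sumrB; apply: eq_bigr => i _; rewrite -sumrB; apply: eq_bigr => j _.
rewrite [eij j i m]eij_sym [eij j i (m + k)]eij_sym.
ring.
Qed.

Lemma swap3 m (H : 'I_n -> 'I_n -> 'I_m.+1 -> P) :
  \sum_(i : 'I_n) \sum_(j : 'I_n | i != j) \sum_(i' < m.+1) H i j i' = \sum_(i' < m.+1) \sum_(i : 'I_n) \sum_(j : 'I_n | i != j) H i j i'.
Proof. by under eq_bigr => i _ do rewrite exchange_big; rewrite exchange_big. Qed.

Lemma Lform m k : Emat n m.+1 (m + k).+1 =
  \sum_(i < m.+1) (m`! * (m + k)`!)%:R *
   (Qr [set: 'I_n] (m - i).+1 (k + 2 * i)%N *+ ((m - i).+1 * (n - ((m - i).+1 + (k + 2 * i))))%N *+ 'C(k + 2 * i, i)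
    - Qr [set: 'I_n] (m - i)%N (k + 2 * i).+2 *+ ((k + 2 * i).+2 * (k + 2 * i).+1)%N *+ 'C(k + 2 * i, i)).
Proof.
rewrite Eform -mulr_sumr sumrB; congr (_ * (_ - _)).
- under eq_bigr => i _ do under eq_bigr => j _ do rewrite !eij_sub S1 mulr_sumr.
  rewrite swap3; apply: eq_bigr => i' _.
  under eq_bigr => i _ do under eq_bigr => j _ do rewrite mulrnAr.
  under eq_bigr => i _ do rewrite sumrMnl.
  by rewrite sumrMnl S2.
- under eq_bigr => i _ do under eq_bigr => j _ do rewrite !eij_sub S1 mulr_sumr.
  rewrite swap3; apply: eq_bigr => i' _.
  under eq_bigr => i _ do under eq_bigr => j _ do rewrite mulrnAr.
  under eq_bigr => i _ do rewrite sumrMnl.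
  by rewrite sumrMnl S3.
Qed.

End P.

Theorem lemma3p9 (n : nat) (hn : (2 <= n)%N) (m k : nat) :
  Emat n m.+1 (m + k).+1 =
  \sum_(i < m.+1)
     (('C(m, i))%:R * (((m + k)`!)%:R / ((i + k)`!)%:R) : rat)
       *: Mpoly (m.+1 - i) (k + 2 * i) n.
Proof.
rewrite Lform; apply: eq_bigr => i _.
have hi : (i <= m)%N by rewrite -ltnS ltn_ord.
rewrite subSn // Mform.
set Q1 := Qr _ (m - i)%N.+1 _; set Q2 := Qr _ (m - i)%N _.
rewrite -!mulrnA mulr_natl mulrnBl -!mulrnA.
rewrite -![Q1 *+ _]scaler_nat -![Q2 *+ _]scaler_nat scalerBr !scalerA.
have hA := bin_fact hi.
have hB : ('C(k + 2 * i, i) * (i`! * (k + i)`!))%N = (k + 2 * i)`!.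
  have e : (k + i)%N = (k + 2 * i - i)%N by lia.
  by rewrite e bin_fact //; lia.
have nz : ((k + i)`!)%:R != 0 :> rat by rewrite Num.Theory.pnatr_eq0 -lt0n fact_gt0.
congr (_ *: _ - _ *: _).
- rewrite [(m - i).+1`!]factS [(i + k)%N]addnC -hA -hB !natrM.
  by field.
- rewrite [(k + 2 * i).+2`!]factS [(k + 2 * i).+1`!]factS [(i + k)%N]addnC -hA -hB !natrM.
  by field.
Qed.
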